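(* As operators on the tensor product of any three finite-dimensional spin representations of $U_q(\mathfrak{su}_2)$, $$Q_{23}:=1\otimes\Delta(Q)=\mathrm{Tr}_a\big(L^+_{a1}L^+_{a2}L^+_{a3}L^-_{a3}L^-_{a2}(L^+_{a1})^{-1}M_a\big),$$ where $Q=(q-q^{-1})^2FE+q^{2H+1}+q^{-2H-1}$.
   Context: $q$ generic complex, $U_q(\mathfrak{su}_2)$ generated by $E,F,q^H$ with $q^HE=qEq^H$, $q^HF=q^{-1}Fq^H$, $[E,F]=(q^{2H}-q^{-2H})/(q-q^{-1})$; coproduct $\Delta(E)=E\otimes q^{-H}+q^H\otimes E$, $\Delta(F)=F\otimes q^{-H}+q^H\otimes F$, $\Delta(q^H)=q^H\otimes q^H$. Auxiliary space $a\cong\mathbb{C}^2$ traced with $\mathrm{Tr}_a$. $L^-=\begin{pmatrix}q^H&0\\ \frac{q-q^{-1}}{q^{1/2}}E&q^{-H}\end{pmatrix}$, $L^+=\begin{pmatrix}q^H&\frac{q-q^{-1}}{q^{1/2}}F\\0&q^{-H}\end{pmatrix}$; $L^\pm_{ai}$ is the matrix on space $a$ with entries in the $i$-th tensor factor; $M_a=\mathrm{diag}(q,q^{-1})$ on space $a$. *)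

(* Defs.v *)
From HB Require Import structures.
From mathcomp Require Import all_boot all_order all_algebra.
From mathcomp Require Import mxtens.
Set Implicit Arguments. Unset Strict Implicit. Unset Printing Implicit Defensive.
Import Order.TTheory GRing.Theory Num.Theory.
Local Open Scope ring_scope.

(* Throughout, p plays the role of q^{1/2}; the deformation parameter is q = p^2. *)
Section Spin.
Variable C : numClosedFieldType.
Variable p : C.

Definition qpar : C := p ^+ 2.

Definition qint (a : nat) : C := (qpar ^+ a - qpar ^- a) / (qpar - qpar^-1).

(* Spin representation of spin j = n/2 on C^(n+1), basis e_k (k = 0..n)
   with H e_k = (n/2 - k) e_k, so q^H e_k = p^(n - 2k) e_k,
   F e_k = e_(k+1), E e_k = [k][n-k+1] e_(k-1). *)
Definition spinK (n : nat) : 'M[C]_(n.+1) :=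
  \matrix_(i, j) ((i == j)%:R * p ^ (n%:Z - 2 * (i : nat)%:Z)).
Definition spinE (n : nat) : 'M[C]_(n.+1) :=
  \matrix_(i, j) (((i : nat).+1 == j)%:R * (qint (i.+1) * qint (n - i))).
Definition spinF (n : nat) : 'M[C]_(n.+1) :=
  \matrix_(i, j) ((i : nat) == j.+1)%:R.

Variables n1 n2 n3 : nat.
Local Notation N := (n1.+1 * n2.+1 * n3.+1)%N.

Definition on1 (X : 'M[C]_(n1.+1)) : 'M[C]_N := X *t 1%:M *t 1%:M.
Definition on2 (X : 'M[C]_(n2.+1)) : 'M[C]_N := 1%:M *t X *t 1%:M.
Definition on3 (X : 'M[C]_(n3.+1)) : 'M[C]_N := 1%:M *t 1%:M *t X.

Definition K_ (i : nat) : 'M[C]_N :=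
  if i == 1%N then on1 (spinK n1) else if i == 2%N then on2 (spinK n2) else on3 (spinK n3).
Definition E_ (i : nat) : 'M[C]_N :=
  if i == 1%N then on1 (spinE n1) else if i == 2%N then on2 (spinE n2) else on3 (spinE n3).
Definition F_ (i : nat) : 'M[C]_N :=
  if i == 1%N then on1 (spinF n1) else if i == 2%N then on2 (spinF n2) else on3 (spinF n3).

(* 1 (x) Delta(X) for X = E, F, q^H, using
   Delta(E) = E (x) q^-H + q^H (x) E, Delta(F) = F (x) q^-H + q^H (x) F,
   Delta(q^H) = q^H (x) q^H *)
Definition E23 : 'M[C]_N := E_ 2 *m invmx (K_ 3) + K_ 2 *m E_ 3.
Definition F23 : 'M[C]_N := F_ 2 *m invmx (K_ 3) + K_ 2 *m F_ 3.
Definition K23 : 'M[C]_N := K_ 2 *m K_ 3.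

Definition Q23 : 'M[C]_N :=
  (qpar - qpar^-1) ^+ 2 *: (F23 *m E23)
  + qpar *: (K23 *m K23) + qpar^-1 *: invmx (K23 *m K23).

(* Auxiliary space a = C^2: an operator on a (x) (V1 (x) V2 (x) V3) is a
   2x2 block matrix whose (alpha,beta) block is the (alpha,beta) entry. *)
Definition Lplus (i : nat) : 'M[C]_(N + N) :=
  block_mx (K_ i) (((qpar - qpar^-1) / p) *: F_ i) 0 (invmx (K_ i)).
Definition Lminus (i : nat) : 'M[C]_(N + N) :=
  block_mx (K_ i) 0 (((qpar - qpar^-1) / p) *: E_ i) (invmx (K_ i)).
Definition Ma : 'M[C]_(N + N) := block_mx (qpar%:M) 0 0 (qpar^-1%:M).

Definition Tr_a (X : 'M[C]_(N + N)) : 'M[C]_N := ulsubmx X + drsubmx X.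

End Spin.

(* Main.v *)
Require Import Defs.
From HB Require Import structures.
From mathcomp Require Import all_boot all_order all_algebra.
From mathcomp Require Import mxtens.
From mathcomp Require Import ring.
Set Implicit Arguments. Unset Strict Implicit. Unset Printing Implicit Defensive.
Import Order.TTheory GRing.Theory Num.Theory.
Local Open Scope ring_scope.

Lemma tens11 (R : comPzRingType) m n :
  (1%:M : 'M[R]_m) *t (1%:M : 'M[R]_n) = 1%:M.
Proof.
apply/matrixP=> i j.
case: (mxtens_indexP i)=> i0 i1; case: (mxtens_indexP j)=> j0 j1.
rewrite tensmxE !mxE (can_eq (@mxtens_indexK m n)) xpair_eqE.
by case: (i0 == j0); case: (i1 == j1); rewrite ?mul1r ?mul0r.
Qed.

Lemma invmx_eq (R : comUnitRingType) n (A B : 'M[R]_n) :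
  A *m B = 1%:M -> invmx A = B.
Proof.
move=> AB; case: (mulmx1_unit AB) => uA _.
by rewrite -[invmx A]mulmx1 -AB mulmxA mulVmx // mul1mx.
Qed.

Definition kd (C : numClosedFieldType) (p : C) n : 'rV[C]_(n.+1) :=
  \row_(i < n.+1) p ^ (n%:Z - 2 * (i : nat)%:Z).
Definition spinKi (C : numClosedFieldType) (p : C) n : 'M[C]_(n.+1) :=
  diag_mx (\row_(i < n.+1) (kd p n 0 i)^-1).

Lemma spinK_diag (C : numClosedFieldType) (p : C) n : spinK p n = diag_mx (kd p n).
Proof.
apply/matrixP=> i j; rewrite !mxE.
by case: (i == j); rewrite ?mul1r ?mul0r.
Qed.

Lemma kd_neq0 (C : numClosedFieldType) (p : C) n i : p != 0 -> kd p n 0 i != 0.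
Proof. by move=> hp; rewrite mxE expfz_neq0. Qed.

Lemma spinKKi (C : numClosedFieldType) (p : C) n : p != 0 ->
  spinK p n *m spinKi p n = 1%:M.
Proof.
move=> hp; rewrite spinK_diag /spinKi mul_diag_mx.
apply/matrixP=> i j; rewrite !mxE.
case: (i == j); rewrite ?mulr1n ?mulr0n ?mulr0 //.
by rewrite mulfV // expfz_neq0.
Qed.

Lemma spinKiK (C : numClosedFieldType) (p : C) n : p != 0 ->
  spinKi p n *m spinK p n = 1%:M.
Proof.
move=> hp; rewrite spinK_diag /spinKi mul_diag_mx.
apply/matrixP=> i j; rewrite !mxE.
case: (i == j); rewrite ?mulr1n ?mulr0n ?mulr0 //.
by rewrite mulVf // expfz_neq0.
Qed.

Lemma spinrel (C : numClosedFieldType) (p : C) n : p != 0 ->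
  spinKi p n *m spinKi p n *m spinF C n *m spinK p n
  = (qpar p)^+2 *: (spinF C n *m spinKi p n).
Proof.
move=> hp; rewrite spinK_diag /spinKi -!mulmxA mul_mx_diag !mul_diag_mx mul_mx_diag.
apply/matrixP=> i j; rewrite !mxE.
case: eqP => [Hij|]; last by move=> _; rewrite ?mulr0 ?mul0r ?mulr0.
have kj : p ^ (n%:Z - 2 * (j:nat)%:Z) != 0 by apply: expfz_neq0.
have -> : p ^ (n%:Z - 2 * (i:nat)%:Z) = p ^ (n%:Z - 2 * (j:nat)%:Z) * (p ^+ 2)^-1.
  rewrite Hij.
  have -> : (n%:Z - 2 * (j.+1)%:Z) = (n%:Z - 2 * j%:Z) + (-2) by rewrite intS; ring.
  by rewrite expfzDr.
rewrite /qpar; field.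
by rewrite kj hp.

Qed.


Lemma step1 (C : fieldType) n (K K' F : 'M[C]_n) (Z : 'M[C]_(n + n)) (c q : C) :
  K *m K' = 1%:M -> K' *m K = 1%:M -> q != 0 ->
  K' *m K' *m F *m K = q^+2 *: (F *m K') ->
  K *m ulsubmx Z = ulsubmx Z *m K ->
  K' *m dlsubmx Z = dlsubmx Z *m K' -> F *m dlsubmx Z = dlsubmx Z *m F ->
  K' *m drsubmx Z *m K = drsubmx Z ->
  ulsubmx (block_mx K (c *: F) 0 K' *m Z *m invmx (block_mx K (c *: F) 0 K') *m block_mx q%:M 0 0 q^-1%:M)
  + drsubmx (block_mx K (c *: F) 0 K' *m Z *m invmx (block_mx K (c *: F) 0 K') *m block_mx q%:M 0 0 q^-1%:M)
   = q *: ulsubmx Z + q^-1 *: drsubmx Z.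
Proof.
move=> KK' K'K q0 rel ca cd1 cd2 ce.
set L := block_mx K (c *: F) 0 K'.
have invL : invmx L = block_mx K' (- c *: (K' *m F *m K)) 0 K.
  apply: invmx_eq; rewrite /L mulmx_block !mulmx0 !mul0mx !addr0 !add0r KK' K'K.
  rewrite -scalemxAr !mulmxA KK' mul1mx -scalemxAl scaleNr addNr.
  by rewrite [RHS]scalar_mx_block.
rewrite invL /L -[Z]submxK !mulmx_block block_mxKul block_mxKdr.
rewrite !mulmx0 !mul0mx !addr0 !add0r ?mul_scalar_mx ?mul_mx_scalar.
rewrite block_mxKul block_mxKdr ce.
set a := ulsubmx Z; set d := dlsubmx Z; set e := drsubmx Z.
have h1 : (K *m a + c *: F *m d) *m K' = a + c *: (d *m F *m K').
  by rewrite mulmxDl ca -mulmxA KK' mulmx1 -!scalemxAl cd2.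
have rel' := rel; rewrite -!mulmxA in rel'.
have h2 : K' *m d *m (- c *: (K' *m F *m K)) = (- c * q^+2) *: (d *m F *m K').
  by rewrite cd1 -scalemxAr -!mulmxA rel' -scalemxAr scalerA !mulmxA.
rewrite h1 h2 !scalerDr !scalerA.
have -> : q^-1 * (- c * q ^+ 2) = - (q * c) by field.
by rewrite scaleNr addrA addrK.
Qed.

Lemma tensZl (R : comPzRingType) m n p r (a : R) (A : 'M[R]_(m, n)) (B : 'M[R]_(p, r)) :
  (a *: A) *t B = a *: (A *t B).
Proof. by apply/matrixP=> i j; rewrite !mxE mulrA. Qed.

Lemma tens3_inv (R : comUnitRingType) m n k (A A' : 'M[R]_m) (B B' : 'M[R]_n) (D D' : 'M[R]_k) :
  A *m A' = 1%:M -> B *m B' = 1%:M -> D *m D' = 1%:M ->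
  invmx (A *t B *t D) = A' *t B' *t D'.
Proof.
by move=> h1 h2 h3; apply: invmx_eq; rewrite !tensmx_mul h1 h2 h3 !tens11.
Qed.

Lemma rearr (V : zmodType) (a b d e g h : V) :
  a + b + (d + e) + g + h = g + (e + b) + (d + a) + h.
Proof.
congr (_ + h); rewrite -[RHS]addrA [RHS]addrC; congr (_ + g).
by rewrite addrACA [RHS]addrC (addrC d a) (addrC e b).
Qed.

Lemma assoc7 (R : pzRingType) n (A B D E F G H : 'M[R]_n) :
  A *m B *m D *m E *m F *m G *m H = A *m (B *m D *m E *m F) *m G *m H.
Proof. by rewrite !mulmxA. Qed.

Unset Implicit Arguments.

Theorem corollaryB2 (C : numClosedFieldType) (p : C) (n1 n2 n3 : nat) :
  p != 0 ->
  (forall k : nat, (0 < k)%N -> (p ^+ 2) ^+ k != 1) ->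
  Q23 p n1 n2 n3 =
  Tr_a (Lplus p n1 n2 n3 1 *m Lplus p n1 n2 n3 2 *m Lplus p n1 n2 n3 3
        *m Lminus p n1 n2 n3 3 *m Lminus p n1 n2 n3 2
        *m invmx (Lplus p n1 n2 n3 1) *m Ma p n1 n2 n3).
Proof.
move=> hp _.
have K1i : invmx (K_ p n1 n2 n3 1) = on1 n2 n3 (spinKi p n1).
  by apply: invmx_eq; rewrite /K_ /= /on1 !tensmx_mul !mulmx1 spinKKi // !tens11.
have K2i : invmx (K_ p n1 n2 n3 2) = on2 n1 n3 (spinKi p n2).
  by apply: invmx_eq; rewrite /K_ /= /on2 !tensmx_mul !mulmx1 spinKKi // !tens11.
have K3i : invmx (K_ p n1 n2 n3 3) = on3 n1 n2 (spinKi p n3).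
  by apply: invmx_eq; rewrite /K_ /= /on3 !tensmx_mul !mulmx1 spinKKi // !tens11.
have q0 : qpar p != 0 by rewrite /qpar expf_neq0.
rewrite /Tr_a assoc7 /Lplus /Ma K1i.
rewrite step1 //; rewrite /Lminus ?K2i ?K3i ?mulmx_block ?block_mxKul ?block_mxKdl ?block_mxKdr.
all: rewrite /K_ /E_ /F_ /=.
all: do 8 rewrite /on1 /on2 /on3 ?mulmx0 ?mul0mx ?addr0 ?add0r ?mulmxDl ?mulmxDr -?scalemxAl -?scalemxAr ?scalerA ?tensmx_mul ?mul1mx ?mulmx1.
all: try by rewrite ?spinKKi ?spinKiK ?tens11 //.
2: by rewrite spinrel // !tensZl.
rewrite /Q23 /E23 /F23 /K23 K3i /K_ /E_ /F_ /=.
do 8 rewrite /on1 /on2 /on3 ?mulmx0 ?mul0mx ?addr0 ?add0r ?mulmxDl ?mulmxDr -?scalemxAl -?scalemxAr ?scalerA ?tensmx_mul ?mul1mx ?mulmx1.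
rewrite (@tens3_inv _ _ _ _ _ 1%:M _ (spinKi p n2 *m spinKi p n2) _ (spinKi p n3 *m spinKi p n3)) ?mulmx1 //; last first.
1,2: by rewrite -!mulmxA (mulmxA (spinK p _) (spinKi p _)) spinKKi // mul1mx spinKKi.
have hc : qpar p * ((qpar p - (qpar p)^-1) / p * ((qpar p - (qpar p)^-1) / p)) = (qpar p - (qpar p)^-1) ^+ 2.
  rewrite /qpar; field; by rewrite hp.
rewrite !scalerDr !scalerA hc.
by rewrite rearr.
Qed.
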